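(* Let $b\ge 2$ be an integer and $p\ge 5$ a prime. Then every extra-special $p$-group $G$ of order $p^{4b+1}$ admits a diagonal double Kodaira structure of non-strong type $(b,\,p)$.
   Context: Notation: $[x,y]=xyx^{-1}y^{-1}$; $o(x)$ is the order of $x$. Definition (diagonal double Kodaira structure). Let $G$ be a finite group and $b,n\ge 2$ integers. A diagonal double Kodaira structure of type $(b,n)$ on $G$ is a set of $4b+1$ elements $\mathsf{r}_{11},\mathsf{t}_{11},\dots,\mathsf{r}_{1b},\mathsf{t}_{1b},\mathsf{r}_{21},\mathsf{t}_{21},\dots,\mathsf{r}_{2b},\mathsf{t}_{2b},\mathsf{z}$ which generate $G$, with $o(\mathsf{z})=n$, satisfying the following relations for all $j,k\in\{1,\dots,b\}$: (Surface relations) $[\mathsf{r}_{1b}^{-1},\mathsf{t}_{1b}^{-1}]\,\mathsf{t}_{1b}^{-1}\,[\mathsf{r}_{1,b-1}^{-1},\mathsf{t}_{1,b-1}^{-1}]\,\mathsf{t}_{1,b-1}^{-1}\cdots[\mathsf{r}_{11}^{-1},\mathsf{t}_{11}^{-1}]\,\mathsf{t}_{11}^{-1}\,(\mathsf{t}_{11}\mathsf{t}_{12}\cdots\mathsf{t}_{1b})=\mathsf{z}$, $[\mathsf{r}_{21}^{-1},\mathsf{t}_{21}]\,\mathsf{t}_{21}\,[\mathsf{r}_{22}^{-1},\mathsf{t}_{22}]\,\mathsf{t}_{22}\cdots[\mathsf{r}_{2b}^{-1},\mathsf{t}_{2b}]\,\mathsf{t}_{2b}\,(\mathsf{t}_{2b}^{-1}\mathsf{t}_{2,b-1}^{-1}\cdots\mathsf{t}_{21}^{-1})=\mathsf{z}^{-1}$.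 (Action of $\mathsf{r}_{1j}$) $[\mathsf{r}_{1j},\mathsf{r}_{2k}]=1$ if $j<k$; $[\mathsf{r}_{1j},\mathsf{r}_{2j}]=1$; $[\mathsf{r}_{1j},\mathsf{r}_{2k}]=\mathsf{z}^{-1}\mathsf{r}_{2k}\mathsf{r}_{2j}^{-1}\mathsf{z}\mathsf{r}_{2j}\mathsf{r}_{2k}^{-1}$ if $j>k$; $[\mathsf{r}_{1j},\mathsf{t}_{2k}]=1$ if $j<k$; $[\mathsf{r}_{1j},\mathsf{t}_{2j}]=\mathsf{z}^{-1}$; $[\mathsf{r}_{1j},\mathsf{t}_{2k}]=[\mathsf{z}^{-1},\mathsf{t}_{2k}]$ if $j>k$; $[\mathsf{r}_{1j},\mathsf{z}]=[\mathsf{r}_{2j}^{-1},\mathsf{z}]$. (Action of $\mathsf{t}_{1j}$) $[\mathsf{t}_{1j},\mathsf{r}_{2k}]=1$ if $j<k$; $[\mathsf{t}_{1j},\mathsf{r}_{2j}]=\mathsf{t}_{2j}^{-1}\mathsf{z}\mathsf{t}_{2j}$; $[\mathsf{t}_{1j},\mathsf{r}_{2k}]=[\mathsf{t}_{2j}^{-1},\mathsf{z}]$ if $j>k$; $[\mathsf{t}_{1j},\mathsf{t}_{2k}]=1$ if $j<k$; $[\mathsf{t}_{1j},\mathsf{t}_{2j}]=[\mathsf{t}_{2j}^{-1},\mathsf{z}]$; $[\mathsf{t}_{1j},\mathsf{t}_{2k}]=\mathsf{t}_{2j}^{-1}\mathsf{z}\mathsf{t}_{2j}\mathsf{z}^{-1}\mathsf{t}_{2k}\mathsf{z}\mathsf{t}_{2j}^{-1}\mathsf{z}^{-1}\mathsf{t}_{2j}\mathsf{t}_{2k}^{-1}$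 if $j>k$; $[\mathsf{t}_{1j},\mathsf{z}]=[\mathsf{t}_{2j}^{-1},\mathsf{z}]$. Such a structure is of strong type $(b,n)$ if both $K_1:=\langle \mathsf{r}_{11},\mathsf{t}_{11},\dots,\mathsf{r}_{1b},\mathsf{t}_{1b},\mathsf{z}\rangle$ and $K_2:=\langle \mathsf{r}_{21},\mathsf{t}_{21},\dots,\mathsf{r}_{2b},\mathsf{t}_{2b},\mathsf{z}\rangle$ equal $G$, and of non-strong type otherwise. Definition. For a prime $p$, a finite $p$-group $G$ is extra-special if its center $Z(G)$ is cyclic of order $p$ and $G/Z(G)$ is a non-trivial elementary abelian $p$-group. *)

(* Defs.v *)
From HB Require Import structures.
From mathcomp Require Import all_boot all_fingroup all_solvable.
Set Implicit Arguments. Unset Strict Implicit. Unset Printing Implicit Defensive.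
Import GroupScope.

(* Paper's commutator convention: [x,y] = x y x^-1 y^-1
   (differs from mathcomp's [~ x, y] = x^-1 y^-1 x y). *)
Definition pcomm (gT : finGroupType) (x y : gT) : gT := x * y * x^-1 * y^-1.

Definition extra_special (p : nat) (gT : finGroupType) (G : {group gT}) : bool :=
  [&& prime p, p.-group G, cyclic 'Z(G), #|'Z(G)| == p,
      p.-abelem (G / 'Z(G)) & G / 'Z(G) != 1].

(* Generators r_{ij}, t_{ij} are given as functions nat -> gT, only the
   indices j in {1..b} being relevant. *)
Definition K1set (gT : finGroupType) (b : nat) (r1 t1 : nat -> gT) (z : gT)
  : {set gT} :=
  z |: [set x | [exists j : 'I_b, (x == r1 j.+1) || (x == t1 j.+1)]].

Definition K2set := K1set.

Definition all_gens (gT : finGroupType) (b : nat) (r1 t1 r2 t2 : nat -> gT)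
  (z : gT) : {set gT} := K1set b r1 t1 z :|: K2set b r2 t2 z.

Definition ddks (gT : finGroupType) (G : {group gT}) (b n : nat)
  (r1 t1 r2 t2 : nat -> gT) (z : gT) : Prop :=
  <<all_gens b r1 t1 r2 t2 z>> = G /\ #[z] = n /\
   (\prod_(0 <= i < b) (pcomm (r1 (b - i))^-1 (t1 (b - i))^-1 * (t1 (b - i))^-1))
     * (\prod_(1 <= j < b.+1) t1 j) = z /\
   (\prod_(1 <= j < b.+1) (pcomm (r2 j)^-1 (t2 j) * t2 j))
     * (\prod_(0 <= i < b) (t2 (b - i))^-1) = z^-1 /\
   forall j k, 1 <= j <= b -> 1 <= k <= b ->
   ((j < k -> pcomm (r1 j) (r2 k) = 1) /\
    (pcomm (r1 j) (r2 j) = 1) /\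
    (k < j -> pcomm (r1 j) (r2 k) = z^-1 * r2 k * (r2 j)^-1 * z * r2 j * (r2 k)^-1) /\
    (j < k -> pcomm (r1 j) (t2 k) = 1) /\
    (pcomm (r1 j) (t2 j) = z^-1) /\
    (k < j -> pcomm (r1 j) (t2 k) = pcomm z^-1 (t2 k)) /\
    (pcomm (r1 j) z = pcomm (r2 j)^-1 z)) /\
   ((j < k -> pcomm (t1 j) (r2 k) = 1) /\
    (pcomm (t1 j) (r2 j) = (t2 j)^-1 * z * t2 j) /\
    (k < j -> pcomm (t1 j) (r2 k) = pcomm (t2 j)^-1 z) /\
    (j < k -> pcomm (t1 j) (t2 k) = 1) /\
    (pcomm (t1 j) (t2 j) = pcomm (t2 j)^-1 z) /\
    (k < j -> pcomm (t1 j) (t2 k) =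
       (t2 j)^-1 * z * t2 j * z^-1 * t2 k * z * (t2 j)^-1 * z^-1 * t2 j * (t2 k)^-1) /\
    (pcomm (t1 j) z = pcomm (t2 j)^-1 z)).

Definition ddks_nonstrong (gT : finGroupType) (G : {group gT}) (b n : nat)
  (r1 t1 r2 t2 : nat -> gT) (z : gT) : Prop :=
  ddks G b n r1 t1 r2 t2 z /\
  ~ (<<K1set b r1 t1 z>> = G /\ <<K2set b r2 t2 z>> = G).

(* Main.v *)
Require Import Defs.
From HB Require Import structures.
From mathcomp Require Import all_boot all_fingroup all_solvable zify.
Set Implicit Arguments. Unset Strict Implicit. Unset Printing Implicit Defensive.
Import GroupScope.

Section Class2.
Variables (gT : finGroupType) (G : {group gT}).
Hypothesis Hc : forall u v, u \in G -> v \in G -> pcomm u v \in 'Z(G).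

Lemma ZcommP c w : c \in 'Z(G) -> w \in G -> commute c w.
Proof. by move=> /centerP[_ H] Gw; apply: H. Qed.

Lemma pcommC (u v : gT) : pcomm u v = (pcomm v u)^-1.
Proof. by rewrite /pcomm !invMg !invgK !mulgA. Qed.

Lemma pcomm_central (c w : gT) : commute c w -> pcomm c w = 1.
Proof. by rewrite /pcomm => ->; rewrite mulgK mulgV. Qed.

Lemma pcommMl u v w : u \in G -> v \in G -> w \in G ->
  pcomm (u * v) w = pcomm u w * pcomm v w.
Proof.
move=> Gu Gv Gw.
have cc : pcomm v w \in 'Z(G) := Hc Gv Gw.
have e : u * v * w * v^-1 = pcomm v w * (u * w).
  by rewrite -(mulgA u v) -(mulgA u) -{1}(mulgKV w (v * w * v^-1)) -/(pcomm v w) mulgA -(ZcommP cc Gu) mulgA.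
transitivity (pcomm v w * pcomm u w).
  by rewrite /pcomm invMg !mulgA e !mulgA.
apply: ZcommP cc _.
by rewrite /pcomm !groupM ?groupV.
Qed.

Lemma pcommVl u w : u \in G -> w \in G -> pcomm u^-1 w = (pcomm u w)^-1.
Proof.
move=> Gu Gw; apply/eqP; rewrite eq_mulgV1 invgK -pcommMl ?groupV //.
by rewrite mulVg pcomm_central //; apply: commute_sym; apply: commute1.
Qed.

Lemma pcommMr u v w : u \in G -> v \in G -> w \in G ->
  pcomm u (v * w) = pcomm u v * pcomm u w.
Proof.
move=> Gu Gv Gw; rewrite pcommC pcommMl // invMg (pcommC u v) (pcommC u w).
apply: ZcommP; first by rewrite groupV Hc.
by rewrite groupV /pcomm !groupM ?groupV.
Qed.

Lemma pcommVr u w : u \in G -> w \in G -> pcomm u w^-1 = (pcomm u w)^-1.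
Proof.
by move=> Gu Gw; rewrite pcommC pcommVl // -pcommC.
Qed.
End Class2.

Lemma split1y (p : nat) (gT : finGroupType) (G : {group gT}) x y :
  p.-group G -> extraspecial G ->
  x \in G -> y \in G -> y \notin 'C[x] ->
  let E := <[x]> <*> <[y]> in let R := 'C_G(E) in
  [/\ #|R| = #|G| %/ p ^ 2, E * R = G, 'Z(R) = 'Z(G)
      & if abelian R then R :=: 'Z(G) else extraspecial R].
Proof.
move=> pG esG Gx Gy not_cxy E R.
have p_pr := extraspecial_prime pG esG.
have oZ := card_center_extraspecial pG esG.
have notZx : x \notin 'C(G).
  apply: contra not_cxy => /centP cGx; rewrite -cent_cycle.
  apply/centP=> t /cycleP[k ->]; apply: commuteX; apply: commute_sym; exact: cGx Gy.
have [[defPhiG defG'] prZ] := esG.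
have maxCx: maximal 'C_G[x] G.
  by rewrite (subcent1_extraspecial_maximal pG esG) // inE notZx.
have sEG: E \subset G by rewrite join_subG !cycle_subG Gx.
have [Ex Ey]: x \in E /\ y \in E by rewrite !mem_gen // inE cycle_id ?orbT.
have sZE: 'Z(G) \subset E.
  rewrite (('Z(G) =P E^`(1)) _) ?der_sub // eqEsubset -{2}defG' dergS // andbT.
  apply: contraR not_cxy => /= not_sZE'.
  rewrite (sameP cent1P commgP) -in_set1 -[[set 1]](prime_TIg prZ not_sZE').
  by rewrite /= -defG' inE !mem_commg.
have ziER: E :&: R = 'Z(E) by rewrite setIA (setIidPl sEG).
have cER: R \subset 'C(E) by rewrite subsetIr.
have iCxG: #|G : 'C_G[x]| = p by apply: p_maximal_index.
have maxR: maximal R 'C_G[x].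
  rewrite /R centY !cent_cycle setIA.
  rewrite (subcent1_extraspecial_maximal pG esG) ?subsetIl // inE Gy andbT -sub_cent1.
  by apply/subsetPn; exists x; rewrite 1?cent1C // inE Gx cent1id.
have sRCx: R \subset 'C_G[x] by rewrite -cent_cycle setIS ?centS ?joing_subl.
have sCxG: 'C_G[x] \subset G by rewrite subsetIl.
have sRG: R \subset G by rewrite subsetIl.
have iRCx: #|'C_G[x] : R| = p by rewrite (p_maximal_index (pgroupS sCxG pG)).
have defG: E * R = G.
  rewrite -cent_joinEr //= -/R joingC joingA.
  have cGx_x: <[x]> \subset 'C_G[x] by rewrite cycle_subG inE Gx cent1id.
  have nsRcx := p_maximal_normal (pgroupS sCxG pG) maxR.
  rewrite (norm_joinEr (subset_trans cGx_x (normal_norm nsRcx))).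
  rewrite (mulg_normal_maximal nsRcx) //=; last first.
    by rewrite centY !cent_cycle cycle_subG !in_setI Gx cent1id cent1C.
  have nsCxG := p_maximal_normal pG maxCx.
  have syG: <[y]> \subset G by rewrite cycle_subG.
  rewrite (norm_joinEr (subset_trans syG (normal_norm nsCxG))).
  by rewrite (mulg_normal_maximal nsCxG) //= cycle_subG inE Gy.
have defZR: 'Z(R) = 'Z(G) by rewrite -['Z(R)]setIA -centM defG.
have [n oG] := p_natP pG.
have n_gt1: n > 1.
   by rewrite ltnW // -(@leq_exp2l p) ?prime_gt1 // -oG min_card_extraspecial.
have oR: #|R| = (p ^ n.-2)%N.
  apply/eqP; rewrite -(divg_indexS sRCx) iRCx /= -(divg_indexS sCxG) iCxG /= oG.
  by rewrite -{1}(subnKC n_gt1) subn2 !expnS !mulKn ?prime_gt0.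
split=> //.
  by rewrite oR oG -expnB ?subn2 ?prime_gt0.
case: ifP => [cRR | not_cRR]; first by rewrite -defZR (center_idP _).
split; rewrite /special defZR //.
have ntR': R^`(1) != 1 by rewrite (sameP eqP commG1P) -abelianE not_cRR.
have pR: p.-group R := pgroupS sRG pG.
have pR': p.-group R^`(1) := pgroupS (der_sub 1 _) pR.
have defR': R^`(1) = 'Z(G).
  apply/eqP; rewrite eqEcard -{1}defG' dergS //= oZ.
  by have [_ _ [k ->]]:= pgroup_pdiv pR' ntR'; rewrite (leq_exp2l 1) ?prime_gt1.
split=> //; apply/eqP; rewrite eqEsubset -{1}defPhiG -defR' (PhiS pG) //=.
by rewrite (Phi_joing pR) joing_subl.
Qed.

Lemma pcomm_commg (gT : finGroupType) (u v : gT) : pcomm u v = [~ u^-1, v^-1].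
Proof. by rewrite /pcomm /commg /conjg !invgK !mulgA. Qed.

Lemma hyp (p : nat) (gT : finGroupType) (z : gT) n : forall (G : {group gT}),
  p.-group G -> extraspecial G -> #|G| = (p ^ n.*2.+1)%N -> 'Z(G) = <[z]> ->
  exists xs ys : nat -> gT,
   [/\ forall i, i < n -> xs i \in G /\ ys i \in G,
       forall i k, i < n -> k < n -> pcomm (xs i) (ys k) = (if i == k then z else 1),
       forall i k, i < n -> k < n -> commute (xs i) (xs k) /\ commute (ys i) (ys k)
     & forall H : {group gT}, z \in H -> (forall i, i < n -> xs i \in H /\ ys i \in H) ->
         G \subset H].
Proof.
elim: n => [|n IH] G pG esG oG eZ.
  have p_pr := extraspecial_prime pG esG.
  have := min_card_extraspecial pG esG; rewrite oG leq_exp2l ?prime_gt1 //.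
have p_pr := extraspecial_prime pG esG.
have oZ := card_center_extraspecial pG esG.
have [[_ defG'] _] := esG.
have Hc : forall u v, u \in G -> v \in G -> pcomm u v \in 'Z(G).
  by move=> u v Gu Gv; rewrite -defG' pcomm_commg mem_commg ?groupV.
have oz : #|<[z]>| = p by rewrite -eZ.
have ntz : z != 1.
  apply/eqP=> z1; move: oz; rewrite z1 cycle1 cards1 => p1; by rewrite -p1 in p_pr.
have [x Gx notCx] : exists2 x, x \in G & x \notin 'C(G).
  apply/exists_inP; rewrite -negb_forall_in; apply: contra (extraspecial_nonabelian esG).
  by move=> /forall_inP H; apply/subsetP.
have [y Gy not_cxy] : exists2 y, y \in G & y \notin 'C[x].
  by apply/subsetPn; rewrite sub_cent1.
have cZ : pcomm x y \in <[z]> by rewrite -eZ Hc.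
have ntc : pcomm x y != 1.
  apply: contra not_cxy => /eqP c1; apply/cent1P.
  by apply/eqP; rewrite eq_mulgV1 invMg mulgA -/(pcomm y x) pcommC c1 invg1.
have [m zm] : exists m, z = (pcomm x y) ^+ m.
  apply/cycleP.
  have e : <[pcomm x y]> = <[z]>.
    apply/eqP; rewrite eqEcard cycle_subG cZ oz.
    have : #[pcomm x y] %| p by rewrite -oz cardSg // cycle_subG.
    move/(prime_nt_dvdP p_pr); rewrite order_eq1 => /(_ ntc) e.
    by rewrite -e leqnn.
  by rewrite e cycle_id.
pose y' := y ^+ m.
have Gy' : y' \in G by rewrite groupX.
have cxy' : pcomm x y' = z.
  rewrite zm /y'; elim: m {zm y' Gy'} => [|m IHm].
    by rewrite /pcomm expg0 mulg1 invg1 mulg1 mulgV.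
  by rewrite !expgS (pcommMr Hc) ?groupX // IHm.
have ncxy' : y' \notin 'C[x].
  apply: contra ntz => /cent1P cyx; by rewrite -cxy' pcomm_central.
have := split1y pG esG Gx Gy' ncxy'.
set E := <[x]> <*> <[y']>; set R := 'C_G(E) => -[oR defG defZR hR].
have sEG : E \subset G by rewrite join_subG !cycle_subG Gx Gy'.
have Ex : x \in E by rewrite mem_gen // inE cycle_id.
have Ey : y' \in E by rewrite mem_gen // inE cycle_id orbT.
have sRG : R \subset G by rewrite subsetIl.
have cRE : forall u v, u \in R -> v \in E -> commute u v.
  by move=> u v /setIP[_ /centP cu] Ev; apply: cu.
have genE : forall H : {group gT}, x \in H -> y' \in H -> E \subset H.
  by move=> H Hx Hy; rewrite join_subG !cycle_subG Hx Hy.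
have oR' : #|R| = (p ^ n.*2.+1)%N.
  rewrite oR oG -expnB ?prime_gt0 //; congr (_ ^ _)%N.
case: ifP hR => [_ eR | _ esR].
  have n0 : n = 0.
    move: oR'; rewrite /R eR oZ => /eqP; rewrite -{1}(expn1 p) eqn_exp2l ?prime_gt1 //.
    by rewrite eqSS eq_sym double_eq0 => /eqP.
  subst n.
  exists (fun _ => x), (fun _ => y'); split.
  - by move=> i _; rewrite Gx Gy'.
  - by case=> // [] [].
  - by move=> i k _ _.
  move=> H Hz Hxy; have [Hx Hy] := Hxy 0 isT; rewrite -defG mulG_subG genE //=.
  by rewrite eR eZ cycle_subG.
have pR : p.-group R := pgroupS sRG pG.
have [xs [ys [HG Hp Hcm Hgen]]] := IH _ pR esR oR' (etrans defZR eZ).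
exists (fun i => if i is i'.+1 then xs i' else x).
exists (fun i => if i is i'.+1 then ys i' else y'); split.
- case=> [|i] /= lti; first by rewrite Gx Gy'.
  by have [/(subsetP sRG) -> /(subsetP sRG) ->] := HG i lti.
- case=> [|i] [|k] /= lti ltk //; rewrite ?ltnS in lti ltk.
  + by rewrite pcomm_central //; apply: commute_sym; apply: cRE (proj2 (HG k ltk)) Ex.
  + by rewrite pcomm_central //; apply: cRE (proj1 (HG i lti)) Ey.
  + by apply: Hp.
- case=> [|i] [|k] /= lti ltk //; rewrite ?ltnS in lti ltk.
  + split; apply: commute_sym; [apply: cRE (proj1 (HG k ltk)) Ex | apply: cRE (proj2 (HG k ltk)) Ey].
  + split; [apply: cRE (proj1 (HG i lti)) Ex | apply: cRE (proj2 (HG i lti)) Ey].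
  + by apply: Hcm.
move=> H Hz Hxy; have [Hx Hy] := Hxy 0 isT; rewrite -defG mulG_subG genE //=.
by apply: Hgen => // i lti; apply: (Hxy i.+1).
Qed.

Lemma es_conv p (gT : finGroupType) (G : {group gT}) :
  extra_special p G -> [/\ p.-group G, extraspecial G & G^`(1) = 'Z(G)].
Proof.
case/and5P=> pr pG _ oZ /andP[abQ ntQ].
have nZG : G \subset 'N('Z(G)) by apply: normal_norm; apply: center_normal.
have sPhi := Phi_min pG nZG abQ.
have sD : G^`(1) \subset 'Z(G) by apply: der1_min => //; apply: abelem_abelian abQ.
have ntD : G^`(1) != 1.
  apply: contraNneq ntQ => D1.
  have cGG : abelian G by apply/derG1P.
  by rewrite (center_idP cGG) quotientS1.
have eD : G^`(1) = 'Z(G).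
  apply/eqP; rewrite eqEcard sD /= (eqP oZ).
  have : #|G^`(1)| %| p by rewrite -(eqP oZ) cardSg.
  by move/(prime_nt_dvdP pr); rewrite -trivg_card1 => /(_ ntD) ->.
have sDPhi : G^`(1) \subset 'Phi(G) by rewrite (Phi_joing pG) joing_subl.
split=> //; split; last by rewrite (eqP oZ).
split=> //; apply/eqP; rewrite eqEsubset sPhi -eD //.
Qed.
Lemma pcomm1_commute (gT : finGroupType) (u v : gT) : pcomm u v = 1 -> commute u v.
Proof.
move=> h; apply/esym; rewrite -[v * u]mul1g -h /pcomm !mulgA mulgKV mulgKV //.
Qed.

Lemma prod_central (gT : finGroupType) (G : {group gT}) (s : seq nat) (f w : nat -> gT) :
  (forall i, i \in s -> f i \in 'Z(G)) -> (forall i, i \in s -> w i \in G) ->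
  \prod_(i <- s) (f i * w i) = (\prod_(i <- s) f i) * \prod_(i <- s) w i.
Proof.
elim: s => [|i s IHs] Zf Gw; first by rewrite !big_nil mulg1.
have Zf' : forall j, j \in s -> f j \in 'Z(G) by move=> j js; apply: Zf; rewrite inE js orbT.
have Gw' : forall j, j \in s -> w j \in G by move=> j js; apply: Gw; rewrite inE js orbT.
rewrite !big_cons IHs // !mulgA; congr (_ * _); rewrite -!mulgA; congr (_ * _).
have ZF : \prod_(j <- s) f j \in 'Z(G).
  by rewrite big_seq; apply: group_prod.
exact: commute_sym (ZcommP ZF (Gw i (mem_head i s))).
Qed.

Lemma prod_rev (gT : finGroupType) (t : nat -> gT) n :
  \prod_(0 <= i < n) (t (n - i))^-1 = (\prod_(1 <= j < n.+1) t j)^-1.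
Proof.
elim: n => [|n IH]; first by rewrite !big_geq ?invg1.
rewrite big_nat_recl // big_nat_recr //= subn0 invMg; congr (_ * _).
rewrite -IH; apply: eq_big_nat => i _; by rewrite subSS.
Qed.

Section Zc.
Variables (gT : finGroupType) (z : gT).
Lemma zconj u : commute z u -> u^-1 * z * u = z.
Proof. by move=> c; rewrite -mulgA c mulKg. Qed.
Lemma zmid u v : commute z (u * v^-1) -> z^-1 * u * v^-1 * z * v * u^-1 = 1.
Proof.
move=> c; rewrite -(mulgA z^-1 u) -(mulgA z^-1) -c mulKg.
by rewrite mulgKV mulgV.
Qed.
Lemma zlong u v : commute z u -> commute z v ->
  u^-1 * z * u * z^-1 * v * z * u^-1 * z^-1 * u * v^-1 = 1.
Proof.
move=> cu cv; rewrite zconj // mulgV mul1g.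
have cui : commute z u^-1 by apply: commuteV.
rewrite -(mulgA v z) cui mulgA mulgK mulgKV mulgV //.
Qed.
End Zc.

Close Scope group_scope.
Theorem theorem2p10 (b p : nat) (hb : 2 <= b) (hp : prime p) (hp5 : 5 <= p)
  (gT : finGroupType) (G : {group gT}) :
  extra_special p G -> #|G| = p ^ (4 * b + 1) ->
  exists (r1 t1 r2 t2 : nat -> gT) (z : gT), ddks_nonstrong G b p r1 t1 r2 t2 z.
Proof.
Local Open Scope group_scope.
move=> esp oG.
have [pG esG defG'] := es_conv esp.
have /cyclicP [z eZ] : cyclic 'Z(G) by case/and5P: esp.
have oZ := card_center_extraspecial pG esG.
have oz : #[z] = p by rewrite /order -eZ.
have ntz : z != 1.
  apply/eqP=> z1; move: oz; rewrite z1 order1 => p1; by rewrite -p1 in hp.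
have Hc : forall u v, u \in G -> v \in G -> pcomm u v \in 'Z(G).
  by move=> u v Gu Gv; rewrite -defG' pcomm_commg mem_commg ?groupV.
have Zz : z \in 'Z(G) by rewrite eZ cycle_id.
have Gz : z \in G by move: Zz => /setIP[].
have cz : forall w, w \in G -> commute z w by move=> w Gw; apply: ZcommP Zz Gw.
have oG' : #|G| = (p ^ (b.*2).*2.+1)%N by rewrite oG; congr (_ ^ _)%N; lia.
have [xs [ys [HG Hp Hcm Hgen]]] := hyp pG esG oG' eZ.
pose a j := xs (j.-1).*2. pose bb j := ys (j.-1).*2.
pose c j := xs (j.-1).*2.+1. pose d j := ys (j.-1).*2.+1.
have GG : forall j, 1 <= j <= b -> [/\ a j \in G, bb j \in G, c j \in G & d j \in G].
  move=> j /andP[j1 jb].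
  have [] := HG (j.-1).*2 ltac:(lia); have [] := HG (j.-1).*2.+1 ltac:(lia).
  by [].
have ixx : forall j k, 1 <= j -> 1 <= k -> ((j.-1).*2 == (k.-1).*2) = (j == k).
  by move=> j k ? ?; apply/eqP/eqP; lia.
have iyy : forall j k, 1 <= j -> 1 <= k -> ((j.-1).*2.+1 == (k.-1).*2.+1) = (j == k).
  by move=> j k ? ?; apply/eqP/eqP; lia.
have ixy : forall j k, ((j.-1).*2 == (k.-1).*2.+1) = false by move=> j k; apply/eqP; lia.
have iyx : forall j k, ((j.-1).*2.+1 == (k.-1).*2) = false by move=> j k; apply/eqP; lia.
have Hab : forall j k, 1 <= j <= b -> 1 <= k <= b -> pcomm (a j) (bb k) = if j == k then z else 1.
  by move=> j k /andP[? ?] /andP[? ?]; rewrite /a /bb Hp ?ixx //; lia.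
have Hcd : forall j k, 1 <= j <= b -> 1 <= k <= b -> pcomm (c j) (d k) = if j == k then z else 1.
  by move=> j k /andP[? ?] /andP[? ?]; rewrite /c /d Hp ?iyy //; lia.
have Had : forall j k, 1 <= j <= b -> 1 <= k <= b -> pcomm (a j) (d k) = 1.
  by move=> j k /andP[? ?] /andP[? ?]; rewrite /a /d Hp ?ixy //; lia.
have Hcb : forall j k, 1 <= j <= b -> 1 <= k <= b -> pcomm (c j) (bb k) = 1.
  by move=> j k /andP[? ?] /andP[? ?]; rewrite /c /bb Hp ?iyx //; lia.
have Caa : forall j k, 1 <= j <= b -> 1 <= k <= b -> commute (a j) (a k).
  by move=> j k /andP[? ?] /andP[? ?]; case: (Hcm (j.-1).*2 (k.-1).*2) => //; lia.
have Cac : forall j k, 1 <= j <= b -> 1 <= k <= b -> commute (a j) (c k).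
  by move=> j k /andP[? ?] /andP[? ?]; case: (Hcm (j.-1).*2 (k.-1).*2.+1) => //; lia.
have Cbb : forall j k, 1 <= j <= b -> 1 <= k <= b -> commute (bb j) (bb k).
  by move=> j k /andP[? ?] /andP[? ?]; case: (Hcm (j.-1).*2 (k.-1).*2) => //; lia.
have Cbd : forall j k, 1 <= j <= b -> 1 <= k <= b -> commute (bb j) (d k).
  by move=> j k /andP[? ?] /andP[? ?]; case: (Hcm (j.-1).*2 (k.-1).*2.+1) => //; lia.
have pcC : forall u v, commute u v -> pcomm u v = 1 by move=> u v; apply: pcomm_central.
pose r1 := a.
pose t1 j := if j == 1%N then bb j * c j else c j.
pose r2 j := if j == 2%N then (a j)^-1 * d j else d j.
pose t2 j := (bb j)^-1.
have F1 : forall j k, 1 <= j <= b -> 1 <= k <= b -> pcomm (r1 j) (r2 k) = 1.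
  move=> j k Ij Ik; have [Gaj Gbj Gcj Gdj] := GG j Ij; have [Gak Gbk Gck Gdk] := GG k Ik.
  rewrite /r1 /r2; case: eqP => _; last exact: Had.
  rewrite (pcommMr Hc) ?groupV // (pcommVr Hc) // Had // (pcomm_central (Caa j k Ij Ik)) //.
  by rewrite invg1 mulg1.
have F2 : forall j k, 1 <= j <= b -> 1 <= k <= b -> pcomm (r1 j) (t2 k) = if j == k then z^-1 else 1.
  move=> j k Ij Ik; have [Gaj Gbj Gcj Gdj] := GG j Ij; have [Gak Gbk Gck Gdk] := GG k Ik.
  by rewrite /r1 /t2 (pcommVr Hc) // Hab //; case: eqP; rewrite ?invg1.
have F3 : forall j k, 1 <= j <= b -> 1 <= k <= b -> pcomm (t1 j) (r2 k) = if j == k then z else 1.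
  move=> j k Ij Ik; have [Gaj Gbj Gcj Gdj] := GG j Ij; have [Gak Gbk Gck Gdk] := GG k Ik.
  have e1 : pcomm (c j) (r2 k) = if j == k then z else 1.
    rewrite /r2; case: eqP => _; last exact: Hcd.
    rewrite (pcommMr Hc) ?groupV // (pcommVr Hc) // Hcd // pcC ?invg1 ?mul1g //.
    exact: commute_sym (Cac k j Ik Ij).
  rewrite /t1; case: eqP => jj1; last exact: e1.
  rewrite (pcommMl Hc) //; last by rewrite /r2; case: eqP; rewrite ?groupM ?groupV.
  rewrite e1; suff -> : pcomm (bb j) (r2 k) = 1 by rewrite mul1g.
  rewrite /r2; case: eqP => k2; last by rewrite (pcomm_central (Cbd j k Ij Ik)).
  rewrite (pcommMr Hc) ?groupV // (pcommVr Hc) // (pcomm_central (Cbd j k Ij Ik)) // mulg1.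
  by rewrite pcommC invgK Hab // k2 jj1.
have F4 : forall j k, 1 <= j <= b -> 1 <= k <= b -> pcomm (t1 j) (t2 k) = 1.
  move=> j k Ij Ik; have [Gaj Gbj Gcj Gdj] := GG j Ij; have [Gak Gbk Gck Gdk] := GG k Ik.
  rewrite /t1 /t2 (pcommVr Hc) //; last by case: eqP; rewrite ?groupM.
  case: eqP => _; last by rewrite Hcb // invg1.
  by rewrite (pcommMl Hc) // Hcb // (pcomm_central (Cbb j k Ij Ik)) // mulg1 invg1.
have S1 : forall j, 1 <= j <= b -> pcomm (r1 j) (t1 j) = if j == 1%N then z else 1.
  move=> j Ij; have [Gaj Gbj Gcj Gdj] := GG j Ij.
  rewrite /r1 /t1; case: eqP => _; last by rewrite (pcomm_central (Cac j j Ij Ij)).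
  by rewrite (pcommMr Hc) // Hab // eqxx (pcomm_central (Cac j j Ij Ij)) // mulg1.
have S2 : forall j, 1 <= j <= b -> pcomm (r2 j) (bb j) = if j == 2%N then z^-1 else 1.
  move=> j Ij; have [Gaj Gbj Gcj Gdj] := GG j Ij.
  rewrite /r2; case: eqP => _; last by rewrite pcC //; apply: commute_sym; apply: Cbd.
  rewrite (pcommMl Hc) ?groupV // (pcommVl Hc) // Hab // eqxx pcC ?mulg1 //.
  by apply: commute_sym; apply: Cbd.
have pz : forall w, w \in G -> pcomm w z = 1.
  by move=> w Gw; apply: pcomm_central; apply: commute_sym; apply: cz.
have pz' : forall w, w \in G -> pcomm z w = 1.
  by move=> w Gw; apply: pcomm_central; apply: cz.
have GR : forall j, 1 <= j <= b -> [/\ r1 j \in G, t1 j \in G, r2 j \in G & t2 j \in G].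
  move=> j Ij; have [Gaj Gbj Gcj Gdj] := GG j Ij.
  rewrite /r1 /t1 /r2 /t2; split; [by [] | by case: eqP => _; rewrite ?groupM | by case: eqP => _; rewrite ?groupM ?groupV | by rewrite groupV].
have ordj : forall j, 1 <= j <= b -> exists o : 'I_b, o.+1 = j.
  move=> j /andP[j1 jb]; have lt : j.-1 < b by lia.
  by exists (Ordinal lt) => /=; lia.
pose A := all_gens b r1 t1 r2 t2 z.
have inA1 : forall j, 1 <= j <= b -> r1 j \in A /\ t1 j \in A.
  move=> j Ij; have [o <-] := ordj j Ij.
  by rewrite /A /all_gens /K1set !inE; split; apply/orP; left; apply/orP; right;
    apply/existsP; exists o; rewrite eqxx ?orbT.
have inA2 : forall j, 1 <= j <= b -> r2 j \in A /\ t2 j \in A.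
  move=> j Ij; have [o <-] := ordj j Ij.
  by rewrite /A /all_gens /K2set /K1set !inE; split; apply/orP; right; apply/orP; right;
    apply/existsP; exists o; rewrite eqxx ?orbT.
have zA : z \in A by rewrite /A /all_gens /K1set !inE eqxx.
have inA : forall j, 1 <= j <= b -> [/\ a j \in <<A>>, bb j \in <<A>>, c j \in <<A>> & d j \in <<A>>].
  move=> j Ij; have [r1A t1A] := inA1 j Ij; have [r2A t2A] := inA2 j Ij.
  have [r1A' t1A' r2A' t2A'] : [/\ r1 j \in <<A>>, t1 j \in <<A>>, r2 j \in <<A>> & t2 j \in <<A>>].
    by split; apply: mem_gen.
  have aA : a j \in <<A>> by [].
  have bA : bb j \in <<A>> by rewrite -[bb j]invgK groupV.
  split=> //.
    move: t1A'; rewrite /t1; case: eqP => // _ t1A'.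
    by rewrite -[c j](mulKg (bb j)) groupM ?groupV.
  move: r2A'; rewrite /r2; case: eqP => // _ r2A'.
  by rewrite -[d j](mulKVg (a j)) groupM.
have genG : <<A>> = G.
  apply/eqP; rewrite eqEsubset gen_subG; apply/andP; split.
    apply/subsetP=> x; rewrite /A /all_gens /K2set /K1set !inE.
    case/orP=> /orP[/eqP -> // | /existsP [o /orP[] /eqP ->]].
    - have [] := GR o.+1; [by rewrite ltn_ord | by []].
    - have [] := GR o.+1; [by rewrite ltn_ord | by []].
    - have [] := GR o.+1; [by rewrite ltn_ord | by []].
    - have [] := GR o.+1; [by rewrite ltn_ord | by []].
  apply: (Hgen [group of <<A>>]); first exact: mem_gen.
  move=> i lti.
  have Ij : 1 <= i./2.+1 <= b by rewrite /= ltn_half_double.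
  have [Ha Hb Hc' Hd] := inA _ Ij.
  case: (boolP (odd i)) => oi.
    have ei : i = (i./2).*2.+1 by rewrite -{1}(odd_double_half i) oi.
    by rewrite ei; split.
  have ei : i = (i./2).*2 by rewrite -{1}(odd_double_half i) (negPf oi).
  by rewrite ei; split.
exists r1, t1, r2, t2, z; split; last first.
  case=> K1G _.
  have I2 : 1 <= 2 <= b by rewrite hb.
  have I1 : 1 <= 1%N <= b by rewrite /= ltnW.
  have [Ga2 Gb2 Gc2 Gd2] := GG 2 I2; have [Ga1 Gb1 Gc1 Gd1] := GG 1%N I1.
  have sub : K1set b r1 t1 z \subset 'C[a 2].
    apply/subsetP=> x Hx; apply/cent1P; move: Hx; rewrite /K1set !inE.
    case/orP=> [/eqP -> | /existsP [o /orP[] /eqP ->]].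
    - by apply: cz.
    - by apply: Caa; rewrite ?ltn_ord.
    - have Io : 1 <= o.+1 <= b by rewrite ltn_ord.
      rewrite /t1; case: eqP => o1.
        apply: commute_sym; apply: commuteM; last by apply: Cac.
        by rewrite o1; apply: pcomm1_commute; rewrite Hab.
      by apply: commute_sym; apply: Cac.
  have : bb 2 \in 'C[a 2] by apply: (subsetP _ _ Gb2); rewrite -K1G gen_subG.
  move/cent1P => cb; move: (Hab 2 2 I2 I2); rewrite eqxx pcomm_central.
    by move=> z1; rewrite -z1 eqxx in ntz.
  exact: commute_sym.
split; first exact: genG.
split; first exact: oz.
have Ib : forall i, i \in index_iota 0 b -> 1 <= b - i <= b.
  by move=> i; rewrite mem_index_iota => /andP[_ ib]; apply/andP; split; lia.
have Ib1 : forall j, j \in index_iota 1 b.+1 -> 1 <= j <= b.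
  by move=> j; rewrite mem_index_iota ltnS.
split.
  rewrite (prod_central (G := G)); first last.
  - by move=> i /Ib Ii; have [_ Gt _ _] := GR _ Ii; rewrite groupV.
  - move=> i /Ib Ii; have [Gr Gt _ _] := GR _ Ii; apply: Hc; by rewrite groupV.
  rewrite prod_rev -mulgA mulVg mulg1.
  rewrite (eq_big_nat _ _ (F2 := fun i => if b - i == 1%N then z else 1)); last first.
    move=> i ib; have Ii : 1 <= b - i <= b by apply: Ib; rewrite mem_index_iota.
    have [Gr Gt _ _] := GR _ Ii.
    by rewrite (pcommVl Hc) ?groupV // (pcommVr Hc) // invgK S1.
  have [b' eb] : exists b', b = b'.+1 by exists b.-1; lia.
  rewrite eb.
  rewrite big_nat_recr //= subSnn eqxx big1_seq ?mul1g // => i /andP[_].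
  by rewrite mem_index_iota => /andP[_ ib]; case: eqP => //; lia.
split.
  rewrite (prod_central (G := G)); first last.
  - by move=> i /Ib1 Ii; have [_ _ _ Gt] := GR _ Ii.
  - move=> i /Ib1 Ii; have [_ _ Gr Gt] := GR _ Ii; apply: Hc; [by rewrite groupV | by []].
  rewrite prod_rev -mulgA mulgV mulg1.
  rewrite (eq_big_nat _ _ (F2 := fun j => if j == 2%N then z^-1 else 1)); last first.
    move=> j jb; have Ij : 1 <= j <= b by apply: Ib1; rewrite mem_index_iota.
    have [Gaj Gbj Gcj Gdj] := GG j Ij; have [_ _ Gr _] := GR _ Ij.
    by rewrite /t2 (pcommVl Hc) ?groupV // (pcommVr Hc) // invgK S2.
  rewrite big_ltn; last lia.
  rewrite big_ltn; last lia.
  rewrite eqxx mul1g.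
  rewrite big1_seq ?mulg1 // => i /andP[_].
  by rewrite mem_index_iota => /andP[i3 _]; case: eqP => //; lia.
move=> j k Ij Ik.
have [Gr1j Gt1j Gr2j Gt2j] := GR j Ij; have [Gr1k Gt1k Gr2k Gt2k] := GR k Ik.
split.
  split; first by move=> _; apply: F1.
  split; first by apply: F1.
  split; first by move=> _; rewrite F1 // zmid //; apply: cz; rewrite groupM ?groupV.
  split; first by move=> jk; rewrite F2 // (ltn_eqF jk).
  split; first by rewrite F2 // eqxx.
  split; first by move=> kj; rewrite F2 // (gtn_eqF kj) (pcommVl Hc) // pz' // invg1.
  by rewrite (pz _ Gr1j) (pz _ (groupVr Gr2j)).
split; first by move=> jk; rewrite F3 // (ltn_eqF jk).
split; first by rewrite F3 // eqxx zconj //; apply: cz.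
split; first by move=> kj; rewrite F3 // (gtn_eqF kj) (pz _ (groupVr Gt2j)).
split; first by move=> _; apply: F4.
split; first by rewrite F4 // (pz _ (groupVr Gt2j)).
split; first by move=> _; rewrite F4 // zlong //; apply: cz.
by rewrite (pz _ Gt1j) (pz _ (groupVr Gt2j)).
Qed.
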